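(* Let $Gr_n$ be the grid graph with vertex set $\{0,\dots,2^n\}^2$, edges between vertices at $\ell_1$-distance 1, and the $\ell_1$-metric. For any $A\subseteq V(Gr_n)$ with $A\ne\emptyset$ and $A^c\ne\emptyset$, we have $\min\{\mathrm{diam}(A),\mathrm{diam}(A^c)\}\le2\,\mathrm{diam}(\partial_VA)$.
   Context: $A^c=V(Gr_n)\setminus A$. The symmetric vertex boundary $\partial_VA$ is the set of all endpoints of edges having one endpoint in $A$ and the other in $A^c$. diam is with respect to the $\ell_1$-metric. *)

(* Defs.v *)
From mathcomp Require Import all_boot.
Set Implicit Arguments. Unset Strict Implicit. Unset Printing Implicit Defensive.

Definition vert (n : nat) : finType := ('I_(2 ^ n).+1 * 'I_(2 ^ n).+1)%type.

Definition adist (a b : nat) : nat := (a - b) + (b - a).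

Definition l1 (n : nat) (x y : vert n) : nat :=
  adist x.1 y.1 + adist x.2 y.2.

Definition gadj (n : nat) (x y : vert n) : bool := l1 x y == 1.

(* diameter w.r.t. l1 metric (0 for the empty set) *)
Definition diam (n : nat) (A : {set vert n}) : nat :=
  \max_(x in A) \max_(y in A) l1 x y.

(* symmetric vertex boundary: all endpoints of edges with one endpoint in A
   and the other in A^c *)
Definition vbound (n : nat) (A : {set vert n}) : {set vert n} :=
  [set x | [exists y, gadj x y && ((x \in A) != (y \in A))]].

(* Main.v *)
From Stdlib Require Import Classical.
Require Import Defs.
From mathcomp Require Import all_boot.
From mathcomp Require Import zify.

Lemma diam_le n (S : {set vert n}) k :
  (forall x y, x \in S -> y \in S -> l1 x y <= k) -> diam S <= k.
Proof.
move=> H; apply/bigmax_leqP => x xS; apply/bigmax_leqP => y yS; exact: H.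
Qed.

Lemma diam_ge n (S : {set vert n}) x y : x \in S -> y \in S -> l1 x y <= diam S.
Proof.
move=> xS yS; rewrite /diam.
apply: leq_trans (leq_bigmax_cond _ xS).
exact: (leq_bigmax_cond _ yS).
Qed.

Lemma ivt (f : nat -> bool) a k : f a != f (a + k) -> exists2 i, a <= i < a + k & f i != f i.+1.
Proof.
elim: k => [|k IH]; first by rewrite addn0 eqxx.
case E: (f (a + k) == f (a + k).+1).
  rewrite addnS -(eqP E) => /IH [i Hi Hf]; exists i => //; lia.
move=> _; exists (a + k); first lia. by rewrite E.
Qed.

Lemma row_ivt n (A : {set vert n}) (u v : vert n) : u.2 = v.2 -> (u \in A) != (v \in A) ->
  exists2 b, b \in vbound A & b.2 = u.2.
Proof.
wlog le: u v / u.1 <= v.1.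
  move=> W; case: (leqP u.1 v.1) => h; first exact: W.
  move=> e d; have [|b bB be] := W v u (ltnW h) (esym e); first by rewrite eq_sym.
  by exists b; rewrite // be.
move=> e d.
pose f i := ((inord i : 'I_(2^n).+1), u.2) \in A.
have fu : f u.1 = (u \in A) by rewrite /f inord_val; rewrite -surjective_pairing.
have fv : f (u.1 + (v.1 - u.1)) = (v \in A).
  rewrite subnKC // /f inord_val e; by rewrite -surjective_pairing.
have [|i Hi Hf] := ivt f u.1 (v.1 - u.1); first by rewrite fu fv.
have iN : i < (2^n).+1 by have := ltn_ord v.1; lia.
have iN1 : i.+1 < (2^n).+1 by have := ltn_ord v.1; lia.
exists ((inord i : 'I_(2^n).+1), u.2) => //.
rewrite inE; apply/existsP; exists ((inord i.+1 : 'I_(2^n).+1), u.2).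
rewrite Hf andbT /gadj /l1 /= !inordK // /adist; apply/eqP; lia.
Qed.

Lemma col_ivt n (A : {set vert n}) (u v : vert n) : u.1 = v.1 -> (u \in A) != (v \in A) ->
  exists2 b, b \in vbound A & b.1 = u.1.
Proof.
wlog le: u v / u.2 <= v.2.
  move=> W; case: (leqP u.2 v.2) => h; first exact: W.
  move=> e d; have [|b bB be] := W v u (ltnW h) (esym e); first by rewrite eq_sym.
  by exists b; rewrite // be.
move=> e d.
pose f i := (u.1, (inord i : 'I_(2^n).+1)) \in A.
have fu : f u.2 = (u \in A) by rewrite /f inord_val; rewrite -surjective_pairing.
have fv : f (u.2 + (v.2 - u.2)) = (v \in A).
  rewrite subnKC // /f inord_val e; by rewrite -surjective_pairing.
have [|i Hi Hf] := ivt f u.2 (v.2 - u.2); first by rewrite fu fv.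
have iN : i < (2^n).+1 by have := ltn_ord v.2; lia.
have iN1 : i.+1 < (2^n).+1 by have := ltn_ord v.2; lia.
exists (u.1, (inord i : 'I_(2^n).+1)) => //.
rewrite inE; apply/existsP; exists (u.1, (inord i.+1 : 'I_(2^n).+1)).
rewrite Hf andbT /gadj /l1 /= !inordK // /adist; apply/eqP; lia.
Qed.

Arguments row_ivt {n A u v}.
Arguments col_ivt {n A u v}.
Arguments diam_ge {n S x y}.

Lemma box n (A S : {set vert n}) :
  (forall x, x \in S -> exists z : vert n, z.2 = x.2 /\ (x \in A) != (z \in A)) ->
  (forall x, x \in S -> exists z : vert n, z.1 = x.1 /\ (x \in A) != (z \in A)) ->
  diam S <= 2 * diam (vbound A).
Proof.
move=> Hr Hc; apply: diam_le => x y xS yS.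
have [z1 [e1 d1]] := Hr x xS; have [z2 [e2 d2]] := Hr y yS.
have [z3 [e3 d3]] := Hc x xS; have [z4 [e4 d4]] := Hc y yS.
have [b1 B1 f1] := row_ivt (esym e1) d1.
have [b2 B2 f2] := row_ivt (esym e2) d2.
have [b3 B3 f3] := col_ivt (esym e3) d3.
have [b4 B4 f4] := col_ivt (esym e4) d4.
have h12 := diam_ge B1 B2; have h34 := diam_ge B3 B4.
rewrite /l1 -f1 -f2 -f3 -f4 mul2n -addnn; apply: leq_add.
  by apply: leq_trans h34; rewrite /l1 leq_addr.
by apply: leq_trans h12; rewrite /l1 leq_addl.
Qed.

Lemma l1_le n (x y : vert n) : l1 x y <= 2 * 2 ^ n.
Proof.
rewrite /l1 /adist; have := ltn_ord x.1; have := ltn_ord x.2;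
have := ltn_ord y.1; have := ltn_ord y.2; lia.
Qed.

Arguments box {n A S}.
Arguments l1_le {n}.

Theorem lemma3p6 (n : nat) (A : {set vert n}) :
  A != set0 -> ~: A != set0 ->
  minn (diam A) (diam (~: A)) <= 2 * diam (vbound A).
Proof.
move=> _ _.
pose Good (S : {set vert n}) :=
  (forall x, x \in S -> exists z : vert n, z.2 = x.2 /\ (x \in A) != (z \in A)) /\
  (forall x, x \in S -> exists z : vert n, z.1 = x.1 /\ (x \in A) != (z \in A)).
have [[GA1 GA2]|nGA] := classic (Good A).
  by apply: leq_trans (geq_minl _ _) (box GA1 GA2).
have [[GC1 GC2]|nGC] := classic (Good (~: A)).
  by apply: leq_trans (geq_minr _ _) (box GC1 GC2).
(* all of diameters bounded by 2N; show diam B >= N or contradiction *)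
suff: 2 ^ n <= diam (vbound A).
  move=> h; apply: leq_trans (geq_minl _ _) _; apply: diam_le => x y _ _.
  apply: leq_trans (l1_le x y) _; lia.
have ex (S : {set vert n}) : ~ Good S -> exists x, x \in S /\
   ((forall z : vert n, z.2 = x.2 -> (z \in A) = (x \in A)) \/
    (forall z : vert n, z.1 = x.1 -> (z \in A) = (x \in A))).
  move=> nG; apply: NNPP => H; apply: nG; split => x xS;
  apply: NNPP => H2; apply: H; exists x; split => //;
  [left|right] => z ez; apply: NNPP => H3; apply: H2; exists z; split => //;
  apply/negP => /eqP E; apply: H3; by rewrite E.
have [a [aA Ha]] := ex _ nGA.
have [c [cC Hc]] := ex _ nGC.
rewrite inE in cC.
have aAt : a \in A = true by [].
have cCf : c \in A = false by apply/negbTE.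
pose o := (ord0 : 'I_(2^n).+1); pose m := (ord_max : 'I_(2^n).+1).
case: Ha => Ha; case: Hc => Hc.
- have [|b1 B1 f1] := @col_ivt n A (o, a.2) (o, c.2) erefl;
     first by rewrite (Ha (o, a.2)) // (Hc (o, c.2)) // aAt cCf.
  have [|b2 B2 f2] := @col_ivt n A (m, a.2) (m, c.2) erefl;
     first by rewrite (Ha (m, a.2)) // (Hc (m, c.2)) // aAt cCf.
  apply: leq_trans (diam_ge B1 B2); rewrite /l1 f1 f2 /adist /=; lia.
- have := Ha (c.1, a.2) erefl; rewrite (Hc (c.1, a.2)) // aAt cCf //.
- have := Ha (a.1, c.2) erefl; rewrite (Hc (a.1, c.2)) // aAt cCf //.
- have [|b1 B1 f1] := @row_ivt n A (a.1, o) (c.1, o) erefl;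
     first by rewrite (Ha (a.1, o)) // (Hc (c.1, o)) // aAt cCf.
  have [|b2 B2 f2] := @row_ivt n A (a.1, m) (c.1, m) erefl;
     first by rewrite (Ha (a.1, m)) // (Hc (c.1, m)) // aAt cCf.
  apply: leq_trans (diam_ge B1 B2); rewrite /l1 f1 f2 /adist /=; lia.
Qed.
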